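(* Let $n\ge1$, $a\in\mathcal{IS}_n$, and consider the semigroup $(\mathcal{IS}_n,*_a)$. Let $x\in\mathcal{IS}_n$. If $\operatorname{ran}(x)\subseteq\operatorname{dom}(a)$ and $\operatorname{dom}(x)\subseteq\operatorname{ran}(a)$, then the $\mathcal{H}$-class of $x$ is $$H_x=\{y\in\mathcal{IS}_n : \operatorname{dom}(y)=\operatorname{dom}(x),\ \operatorname{ran}(y)=\operatorname{ran}(x)\};$$ otherwise $H_x=\{x\}$.
   Context: $\mathcal{IS}_n$ is the set of all partial injective maps of $N=\{1,\dots,n\}$, including the empty map; $\operatorname{dom}(x)$, $\operatorname{ran}(x)$ denote domain and range. Maps are composed from left to right: $(xy)(i)=y(x(i))$, defined exactly when $i\in\operatorname{dom}(x)$ and $x(i)\in\operatorname{dom}(y)$. For fixed $a\in\mathcal{IS}_n$, $x*_a y:=xay$. Green's relations in a semigroup $S$: with $S^1$ the semigroup $S$ with an identity adjoined, $x\mathcal{L}y$ iff $S^1x=S^1y$, $x\mathcal{R}y$ iff $xS^1=yS^1$, $\mathcal{H}=\mathcal{L}\cap\mathcal{R}$, $\mathcal{D}=\mathcal{L}\circ\mathcal{R}$ (which equals $\mathcal{R}\circ\mathcal{L}$). $L_x,R_x,H_x,D_x$ denote the corresponding classes of $x$, here computed in $(\mathcal{IS}_n,*_a)$. *)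

(* Defs.v *)
From mathcomp Require Import all_boot.
Set Implicit Arguments. Unset Strict Implicit. Unset Printing Implicit Defensive.

(* Partial maps of N = {0,...,n-1} (i.e. 'I_n, standing for {1,...,n}):
   x i = Some j means i is in dom(x) and x(i) = j; None means undefined. *)
Definition ptmap (n : nat) := {ffun 'I_n -> option 'I_n}.

Definition pinj n (x : ptmap n) : Prop :=
  forall i j k, x i = Some k -> x j = Some k -> i = j.

Definition pdom n (x : ptmap n) : {set 'I_n} := [set i | x i != None].
Definition pran n (x : ptmap n) : {set 'I_n} := [set j | [exists i, x i == Some j]].

(* composition from left to right: (xy)(i) = y(x(i)) *)
Definition pcomp n (x y : ptmap n) : ptmap n := [ffun i => obind y (x i)].

Definition sandw n (a x y : ptmap n) : ptmap n := pcomp (pcomp x a) y.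

(* membership in S^1 x and x S^1 for S = (IS_n, *_a) *)
Definition inS1l n (a x z : ptmap n) : Prop :=
  z = x \/ exists s, pinj s /\ z = sandw a s x.
Definition inS1r n (a x z : ptmap n) : Prop :=
  z = x \/ exists s, pinj s /\ z = sandw a x s.

Definition greenL n (a x y : ptmap n) : Prop :=
  forall z, pinj z -> (inS1l a x z <-> inS1l a y z).
Definition greenR n (a x y : ptmap n) : Prop :=
  forall z, pinj z -> (inS1r a x z <-> inS1r a y z).
Definition greenH n (a x y : ptmap n) : Prop := greenL a x y /\ greenR a x y.

Definition inHclass n (a x y : ptmap n) : Prop := pinj y /\ greenH a x y.

(* Main.v *)
Require Import Defs.
From mathcomp Require Import all_boot.
Set Implicit Arguments. Unset Strict Implicit. Unset Printing Implicit Defensive.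

Definition pinv n (f : ptmap n) : ptmap n := [ffun j => [pick i | f i == Some j]].

Lemma pinvP n (f : ptmap n) (j i : 'I_n) : pinv f j = Some i -> f i = Some j.
Proof. by rewrite ffunE; case: pickP => // k /eqP H [<-]. Qed.

Lemma pinv_some n (f : ptmap n) (j : 'I_n) : j \in pran f -> exists i, pinv f j = Some i.
Proof.
rewrite inE => /existsP [i /eqP Hi]; rewrite ffunE; case: pickP => [k _|/(_ i)].
  by exists k.
by rewrite Hi eqxx.
Qed.

Lemma pinj_pinv n (f : ptmap n) : pinj (pinv f).
Proof.
move=> i j k /pinvP Hi /pinvP Hj; rewrite Hi in Hj; by case: Hj.
Qed.

Lemma pinj_comp n (x y : ptmap n) : pinj x -> pinj y -> pinj (Defs.pcomp x y).
Proof.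
move=> Hx Hy i j k; rewrite !ffunE.
case Hi: (x i) => [p|] //=; case Hj: (x j) => [q|] //= Hp Hq.
have epq := Hy _ _ _ Hp Hq; subst; exact: Hx _ _ _ Hi Hj.
Qed.

Lemma sandwE n (a s x : ptmap n) (i : 'I_n) : sandw a s x i = obind x (obind a (s i)).
Proof. by rewrite /sandw /Defs.pcomp !ffunE. Qed.

Lemma inranP n (f : ptmap n) (j : 'I_n) : reflect (exists i, f i = Some j) (j \in pran f).
Proof.
rewrite inE; apply: (iffP existsP) => [[i /eqP]|[i H]]; exists i => //; exact/eqP.
Qed.

Lemma L1 n (a x z : ptmap n) : pinj z -> pdom x \subset pran a ->
  pran z \subset pran x -> inS1l a x z.
Proof.
move=> Hzi Hd Hr; right.
exists (Defs.pcomp z (Defs.pcomp (pinv x) (pinv a))); split.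
  by apply: pinj_comp => //; apply: pinj_comp; apply: pinj_pinv.
apply/ffunP => i; rewrite sandwE !ffunE.
case Hz: (z i) => [j|] //=.
have: j \in pran z by apply/inranP; exists i.
move/(subsetP Hr)/pinv_some => [k Hk]. idtac.
have Hxk := pinvP Hk.
have: k \in pran a by apply: (subsetP Hd); rewrite inE Hxk.
move/pinv_some => [l Hl]; rewrite ffunE Hk /= Hl /= (pinvP Hl) /= Hxk //.
Qed.

Lemma R1 n (a x z : ptmap n) : pinj a -> pinj x -> pinj z -> pran x \subset pdom a ->
  pdom z \subset pdom x -> inS1r a x z.
Proof.
move=> Ha Hx Hzi Hr Hd; right.
exists (Defs.pcomp (pinv a) (Defs.pcomp (pinv x) z)); split.
  by apply: pinj_comp; first apply: pinj_pinv; apply: pinj_comp => //; apply: pinj_pinv.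
apply/ffunP => i; rewrite sandwE.
case Hxi: (x i) => [k|] /=.
  have: k \in pdom a by apply: (subsetP Hr); apply/inranP; exists i.
  rewrite inE; case Hak: (a k) => [l|] //= _.
  have: l \in pran a by apply/inranP; exists k.
  move/pinv_some => [k' Hk']; rewrite ffunE Hk' /=.
  have := Ha _ _ _ (pinvP Hk') Hak => ?; subst k'.
  have: k \in pran x by apply/inranP; exists i.
  move/pinv_some => [i' Hi']; rewrite ffunE Hi' /=.
  by have := Hx _ _ _ (pinvP Hi') Hxi => ->.
case Hz: (z i) => [j|] //.
have: i \in pdom z by rewrite inE Hz.
by move/(subsetP Hd); rewrite inE Hxi.
Qed.

Lemma ranS n (a s x : ptmap n) : pran (sandw a s x) \subset pran x.
Proof.
apply/subsetP => j /inranP [i]; rewrite sandwE.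
case: (s i) => [p|] //=; case: (a p) => [q|] //= H; apply/inranP; by exists q.
Qed.

Lemma domS n (a s x : ptmap n) : pdom (sandw a x s) \subset pdom x.
Proof.
apply/subsetP => i; rewrite !inE sandwE; by case: (x i).
Qed.

Lemma L1' n (a x z : ptmap n) : pdom x \subset pran a -> pinj z ->
  (inS1l a x z <-> pran z \subset pran x).
Proof.
move=> Hd Hz; split; last exact: L1.
by case=> [->|[s [_ ->]]]; [apply: subxx | apply: ranS].
Qed.

Lemma R1' n (a x z : ptmap n) : pinj a -> pinj x -> pran x \subset pdom a -> pinj z ->
  (inS1r a x z <-> pdom z \subset pdom x).
Proof.
move=> Ha Hx Hd Hz; split; last exact: R1.
by case=> [->|[s [_ ->]]]; [apply: subxx | apply: domS].
Qed.

Theorem theorem4 (n : nat) (a x : ptmap n) :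
  0 < n -> pinj a -> pinj x ->
  ((pran x \subset pdom a) && (pdom x \subset pran a) ->
     forall y, inHclass a x y <-> (pinj y /\ pdom y = pdom x /\ pran y = pran x))
  /\
  (~~ ((pran x \subset pdom a) && (pdom x \subset pran a)) ->
     forall y, inHclass a x y <-> y = x).
Proof.
move=> _ Ha Hx; split.
  move=> /andP [Hr Hd] y; split.
    move=> [Hy [HL HR]]; split => //.
    have Lxy := (proj1 (HL x Hx) (or_introl erefl)).
    have Lyx := (proj2 (HL y Hy) (or_introl erefl)).
    have Rxy := (proj1 (HR x Hx) (or_introl erefl)).
    have Ryx := (proj2 (HR y Hy) (or_introl erefl)).
    case: Lxy => [<-|[s [_ Es]]]; first by [].
    case: Rxy => [<-|[t [_ Et]]]; first by [].
    split; apply/eqP; rewrite eqEsubset.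
      rewrite (proj1 (R1' Ha Hx Hr Hy) Ryx) /=; rewrite Et; apply: domS.
    rewrite (proj1 (L1' Hd Hy) Lyx) /=; rewrite Es; apply: ranS.
  move=> [Hy [Edom Eran]]; split => //.
  have Hdy : pdom y \subset pran a by rewrite Edom.
  have Hry : pran y \subset pdom a by rewrite Eran.
  split => z Hz.
    split => H; [apply: (proj2 (L1' Hdy Hz)); rewrite Eran; exact: (proj1 (L1' Hd Hz) H) | apply: (proj2 (L1' Hd Hz)); rewrite -Eran; exact: (proj1 (L1' Hdy Hz) H)].
  split => H; [apply: (proj2 (R1' Ha Hy Hry Hz)); rewrite Edom; exact: (proj1 (R1' Ha Hx Hr Hz) H) | apply: (proj2 (R1' Ha Hx Hr Hz)); rewrite -Edom; exact: (proj1 (R1' Ha Hy Hry Hz) H)].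
move=> Hn y; split; last first.
  by move=> ->; split => //; split => z _.
move=> [Hy [HL HR]].
case/nandP: Hn => Hn.
- have [j Hj Hja] : exists2 j, j \in pran x & j \notin pdom a.
    exact/subsetPn.
  have [i Hi] := inranP _ _ Hj.
  case: (proj1 (HR x Hx) (or_introl erefl)) => [->//|[s [_ Es]]].
  case: (proj2 (HR y Hy) (or_introl erefl)) => [->//|[t [_ Et]]].
  move: (Hi); rewrite Es sandwE.
  case Hyi: (y i) => [p|] //=.
  move: Hyi; rewrite Et sandwE Hi /=.
  by case Haj: (a j) => //; rewrite inE Haj in Hja.
- have [i Hi Hia] : exists2 i, i \in pdom x & i \notin pran a.
    exact/subsetPn.
  move: Hi; rewrite inE; case Hxi: (x i) => [j|] // _.
  case: (proj1 (HL x Hx) (or_introl erefl)) => [->//|[s [_ Es]]].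
  case: (proj2 (HL y Hy) (or_introl erefl)) => [->//|[t [_ Et]]].
  move: (Hxi); rewrite Es sandwE.
  case: (s i) => [l|] //=; case: (a l) => [m|] //=.
  rewrite Et sandwE.
  case: (t m) => [l'|] //=; case Hal: (a l') => [k|] //= Hxk.
  have := Hx _ _ _ Hxi Hxk => Eik; subst k.
  by move: Hia; have ->: i \in pran a by apply/inranP; exists l'.
Qed.
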